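(* For every complex $z$, \[ \cosh(\pi z)=\sum_{n\ge0}\frac{\prod_{j=0}^{n-1}(j^2+9z^2)}{(2n)!}, \] and, equivalently via Euler's transformation, $\cosh(\pi z)$ equals the continued fraction with $a(0)=1$, $a(1)=2$, $a(n)=5n^2-4n+1+9z^2$ for $n\ge2$, $b(0)=9z^2$, $b(n)=-2n(2n-1)(n^2+9z^2)$ for $n\ge1$.
   Context: For sequences $a(n),b(n)$, the continued fraction is $a(0)+\cfrac{b(0)}{a(1)+\cfrac{b(1)}{a(2)+\cdots}}$; the empty product equals $1$. *)

(* Defs.v *)
From Stdlib Require Import Reals Factorial.
From Coquelicot Require Export Coquelicot.
Open Scope C_scope.

Definition Cexp (w : C) : C :=
  (exp (Re w) * cos (Im w), exp (Re w) * sin (Im w))%R.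

Definition Ccosh (w : C) : C := (Cexp w + Cexp (- w)) / 2.

Fixpoint prod_term (z : C) (n : nat) : C :=
  match n with
  | O => 1
  | S m => prod_term z m * (RtoC (INR m) ^ 2 + 9 * z ^ 2)
  end.

(* Fundamental recurrence U_{m+2} = a(m+2) U_{m+1} + b(m+1) U_m,
   returning the pair (U_n, U_{n+1}) from initial (U_0, U_1). *)
Fixpoint cf_pair (a b : nat -> C) (u0 u1 : C) (n : nat) : C * C :=
  match n with
  | O => (u0, u1)
  | S m => let (x, y) := cf_pair a b u0 u1 m in
           (y, a (m + 2)%nat * y + b (m + 1)%nat * x)
  end.

(* Numerators P_n and denominators Q_n of the convergents of
   a(0) + b(0)/(a(1) + b(1)/(a(2) + ...)), with P_{-1}=1, Q_{-1}=0. *)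
Definition cf_num (a b : nat -> C) (n : nat) : C :=
  fst (cf_pair a b (a 0%nat) (a 1%nat * a 0%nat + b 0%nat) n).
Definition cf_den (a b : nat -> C) (n : nat) : C :=
  fst (cf_pair a b 1 (a 1%nat) n).

(* n-th convergent P_n / Q_n = a(0) + b(0)/(a(1) + ... + b(n-1)/a(n)). *)
Definition cf_convergent (a b : nat -> C) (n : nat) : C :=
  cf_num a b n / cf_den a b n.

Definition cf_value (a b : nat -> C) (v : C) : Prop :=
  filterlim (cf_convergent a b) eventually (locally v).

Definition cf_a (z : C) (n : nat) : C :=
  match n with
  | O => 1
  | 1%nat => 2
  | _ => RtoC (5 * INR n ^ 2 - 4 * INR n + 1) + 9 * z ^ 2
  end.

Definition cf_b (z : C) (n : nat) : C :=
  match n with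
  | O => 9 * z ^ 2
  | _ => RtoC (- 2 * INR n * (2 * INR n - 1)) * (RtoC (INR n ^ 2) + 9 * z ^ 2)
  end.

(* Main.v *)
Require Import Defs.
From Stdlib Require Import Reals Lra Psatz Lia Factorial.
From Coquelicot Require Import Coquelicot.
Open Scope C_scope.

Lemma RtoC_neq0 (x : R) : x <> 0%R -> RtoC x <> 0.
Proof. intros H E. apply H. injection E. auto. Qed.

Lemma cf_pair_seq (a b : nat -> C) (Y : nat -> C) :
  (forall m, Y (S (S m)) = a (S (S m)) * Y (S m) + b (S m) * Y m) ->
  forall n, cf_pair a b (Y 0%nat) (Y 1%nat) n = (Y n, Y (S n)).
Proof.
  intros HY n; induction n as [|m IH]; simpl; auto.
  rewrite IH. replace (m+2)%nat with (S (S m)) by lia.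
  replace (m+1)%nat with (S m) by lia. rewrite HY. auto.
Qed.

Definition tt (z : C) (n : nat) : C := prod_term z n / RtoC (INR (fact (2 * n))).

Fixpoint XX (z : C) (n : nat) : C :=
  match n with
  | O => 1
  | S m => RtoC ((2 * INR m + 2) * (2 * INR m + 1)) * XX z m + prod_term z (S m)
  end.

Lemma fact2S n : INR (fact (2 * S n)) = ((2 * INR n + 2) * (2 * INR n + 1) * INR (fact (2 * n)))%R.
Proof.
  replace (2 * S n)%nat with (S (S (2 * n))) by lia.
  rewrite !fact_simpl, !mult_INR, !S_INR, mult_INR. simpl. ring.
Qed.

Lemma XX_sum z n : XX z n = RtoC (INR (fact (2 * n))) * sum_n (tt z) n.
Proof.
  induction n as [|n IH].
  - rewrite sum_O. unfold tt. simpl. field.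
  - rewrite sum_Sn. simpl XX. rewrite IH. change plus with Cplus.
    unfold tt. rewrite fact2S. rewrite !RtoC_mult.
    cbn [prod_term].
    pose proof (pos_INR n).
    field. repeat split; apply RtoC_neq0; try apply INR_fact_neq_0; lra.
Qed.

Lemma XX_rec z m : XX z (S (S m)) = cf_a z (S (S m)) * XX z (S m) + cf_b z (S m) * XX z m.
Proof.
  cbn [XX prod_term cf_a cf_b]. rewrite !S_INR.
  repeat (rewrite ?RtoC_mult, ?RtoC_plus, ?RtoC_minus, ?RtoC_pow, ?RtoC_opp).
  ring.
Qed.

Definition DD (n : nat) : C := RtoC (INR (fact (2 * n))).

Lemma DD_rec z m : DD (S (S m)) = cf_a z (S (S m)) * DD (S m) + cf_b z (S m) * DD m.
Proof.
  unfold DD. rewrite !fact2S. cbn [cf_a cf_b]. rewrite !S_INR.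
  repeat (rewrite ?RtoC_mult, ?RtoC_plus, ?RtoC_minus, ?RtoC_pow, ?RtoC_opp).
  ring.
Qed.

Lemma conv_eq z n : cf_convergent (cf_a z) (cf_b z) n = sum_n (tt z) n.
Proof.
  unfold cf_convergent, cf_num, cf_den.
  replace (cf_a z 1 * cf_a z 0 + cf_b z 0) with (XX z 1).
  2:{ cbn [XX prod_term cf_a cf_b]. simpl INR. repeat (rewrite ?RtoC_mult, ?RtoC_plus, ?RtoC_minus, ?RtoC_pow, ?RtoC_opp). ring. }
  replace (cf_a z 0) with (XX z 0) by reflexivity.
  replace (1 : C) with (DD 0) at 1. 2:{ unfold DD. simpl. reflexivity. }
  replace (cf_a z 1) with (DD 1). 2:{ unfold DD. simpl. f_equal. }
  rewrite (cf_pair_seq _ _ (XX z) (XX_rec z)), (cf_pair_seq _ _ DD (DD_rec z)).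
  simpl fst. rewrite XX_sum. unfold DD. field. apply RtoC_neq0, INR_fact_neq_0.
Qed.

Lemma cf_part z L : is_series (tt z) L -> cf_value (cf_a z) (cf_b z) L.
Proof.
  intros H. unfold cf_value. eapply filterlim_ext. 2: exact H.
  intros n. simpl. symmetry. apply conv_eq.
Qed.

Definition mm (m : nat) : R := ((2 * INR m + 2) * (2 * INR m + 1))%R.

Lemma mm_pos m : (0 < mm m)%R.
Proof. unfold mm. pose proof (pos_INR m). nra. Qed.

Fixpoint aa (s : C) (n : nat) : C :=
  match n with
  | O => 1
  | S m => aa s m * (RtoC (4 * INR m ^ 2) + s) * RtoC (/ mm m)
  end.

Definition uu s n := fst (aa s n).
Definition vv s n := snd (aa s n).

Lemma uu_S s m : uu s (S m) = ((uu s m * (4 * INR m ^ 2 + fst s) - vv s m * snd s) / mm m)%R.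
Proof.
  unfold uu, vv. simpl aa. destruct (aa s m) as [x y]. destruct s as [p q].
  unfold Cmult, RtoC, Cplus. simpl. unfold Rdiv. ring.
Qed.

Lemma vv_S s m : vv s (S m) = ((vv s m * (4 * INR m ^ 2 + fst s) + uu s m * snd s) / mm m)%R.
Proof.
  unfold uu, vv. simpl aa. destruct (aa s m) as [x y]. destruct s as [p q].
  unfold Cmult, RtoC, Cplus. simpl. unfold Rdiv. ring.
Qed.

Lemma aa_step_le s m : (Cmod s <= INR m)%R -> (Cmod (aa s (S m)) <= Cmod (aa s m))%R.
Proof.
  intros Hm. simpl aa. rewrite !Cmod_mult, !Cmod_R.
  pose proof (Cmod_ge_0 (aa s m)) as H0.
  pose proof (pos_INR m) as Hp.
  pose proof (mm_pos m) as Hmm.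
  assert (H1 : (Cmod (RtoC (4 * INR m ^ 2) + s) <= 4 * INR m ^ 2 + Cmod s)%R).
  { eapply Rle_trans. apply Cmod_triangle. rewrite Cmod_R, Rabs_pos_eq. lra. nra. }
  rewrite Rabs_pos_eq by (left; apply Rinv_0_lt_compat; auto).
  assert (H2: (Cmod (RtoC (4 * INR m ^ 2) + s) * / mm m <= 1)%R).
  { apply (Rmult_le_reg_r (mm m)); auto. rewrite Rmult_assoc, Rinv_l by lra.
    unfold mm in *. nra. }
  pose proof (Cmod_ge_0 (RtoC (4 * INR m ^ 2) + s)).
  assert (0 <= / mm m)%R by (left; apply Rinv_0_lt_compat; auto).
  rewrite Rmult_assoc. rewrite <- (Rmult_1_r (Cmod (aa s m))) at 2.
  apply Rmult_le_compat_l; auto.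
Qed.

Lemma sum_ge_term (f : nat -> R) N k : (forall i, 0 <= f i)%R -> (k <= N)%nat -> (f k <= sum_f_R0 f N)%R.
Proof.
  intros Hf Hk. induction N as [|N IH].
  - replace k with 0%nat by lia. simpl. lra.
  - simpl. destruct (Nat.eq_dec k (S N)) as [->|Hne].
    + assert (0 <= sum_f_R0 f N)%R. { apply cond_pos_sum. auto. } lra.
    + specialize (Hf (S N)). assert (k <= N)%nat by lia. specialize (IH H). lra.
Qed.

Lemma aa_bounded s : exists B, forall n, (Cmod (aa s n) <= B)%R.
Proof.
  destruct (INR_unbounded (Cmod s)) as [N HN].
  exists (sum_f_R0 (fun k => Cmod (aa s k)) N). intros n.
  induction n as [|n IH].
  - apply (sum_ge_term (fun k => Cmod (aa s k))). intros; apply Cmod_ge_0. lia.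
  - destruct (Compare_dec.le_lt_dec (S n) N).
    + apply (sum_ge_term (fun k => Cmod (aa s k))). intros; apply Cmod_ge_0. auto.
    + eapply Rle_trans. 2: exact IH. apply aa_step_le.
      assert (INR N <= INR n)%R by (apply le_INR; lia). lra.
Qed.

Lemma radius_ge1 (f : nat -> R) s : (forall n, f n = uu s n \/ f n = vv s n) -> Rbar_le 1 (CV_radius f).
Proof.
  intros Hf. destruct (aa_bounded s) as [B HB].
  destruct (CV_radius_bounded f) as [Hub _]. apply Hub.
  exists B. intros n. rewrite pow1, Rmult_1_r.
  eapply Rle_trans. 2: apply (HB n).
  eapply Rle_trans. 2: apply Rmax_Cmod.
  destruct (Hf n) as [-> | ->]; unfold uu, vv; [apply Rmax_l | apply Rmax_r].
Qed.

Close Scope C_scope. Open Scope R_scope.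

Lemma is_series_zero_val (w : nat -> R) L : (forall n, w n = 0%R) -> is_series w L -> L = 0%R.
Proof.
  intros Hw H.
  pose proof (is_series_scal 0%R w L H) as H0.
  unfold scal in H0; simpl in H0; unfold mult in H0; simpl in H0.
  rewrite Rmult_0_l in H0.
  apply (is_series_ext _ w) in H0. 2:{ intros n. rewrite Hw. apply Rmult_0_l. }
  apply is_series_unique in H. apply is_series_unique in H0. congruence.
Qed.

Lemma isPS (a : nat -> R) y : ex_pseries a y -> is_series (fun n => (a n * y ^ n)%R) (PSeries a y).
Proof. intros H. apply Series_correct. apply ex_pseries_R. exact H. Qed.

Lemma isPS_incr (a : nat -> R) y : ex_pseries a y ->
  is_series (fun n => (PS_incr_1 a n * y ^ n)%R) (y * PSeries a y)%R.
Proof.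
  intros H. rewrite <- PSeries_incr_1. apply isPS. apply ex_pseries_incr_1. exact H.
Qed.

Lemma F_ode_gen (u v : nat -> R) (p q y : R) :
  (forall m, u (S m) = ((u m * (4 * INR m ^ 2 + p) - v m * q) / mm m)%R) ->
  Rbar_lt (Rabs y) (CV_radius u) -> Rbar_lt (Rabs y) (CV_radius v) ->
  (4*y*(1-y) * PSeries (PS_derive (PS_derive u)) y + 2*(1-2*y) * PSeries (PS_derive u) y
   = p * PSeries u y - q * PSeries v y)%R.
Proof.
  intros Hu Hru Hrv.
  assert (E0 : ex_pseries u y) by (apply CV_radius_inside; auto).
  assert (Ev : ex_pseries v y) by (apply CV_radius_inside; auto).
  assert (E1 : ex_pseries (PS_derive u) y) by (apply ex_pseries_derive; auto).
  assert (E2 : ex_pseries (PS_derive (PS_derive u)) y).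
  { apply ex_pseries_derive. rewrite CV_radius_derive. auto. }
  set (d1 := PS_derive u) in *. set (d2 := PS_derive d1) in *.
  pose proof (isPS_incr _ _ E2) as S1.
  pose proof (isPS_incr _ _ (ex_pseries_incr_1 _ _ E2)) as S2.
  rewrite PSeries_incr_1 in S2.
  pose proof (isPS _ _ E1) as S3.
  pose proof (isPS_incr _ _ E1) as S4.
  pose proof (isPS _ _ E0) as S5.
  pose proof (isPS _ _ Ev) as S6.
  pose proof (is_series_plus _ _ _ _ (is_series_scal 4%R _ _ S1)
      (is_series_plus _ _ _ _ (is_series_scal (-4)%R _ _ S2)
      (is_series_plus _ _ _ _ (is_series_scal 2%R _ _ S3)
      (is_series_plus _ _ _ _ (is_series_scal (-4)%R _ _ S4)
      (is_series_plus _ _ _ _ (is_series_scal (-p)%R _ _ S5)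
                               (is_series_scal q _ _ S6)))))) as ST.
  apply is_series_zero_val in ST.
  - unfold plus, scal in ST; simpl in ST; unfold mult in ST; simpl in ST. nra.
  - intros n. unfold plus, scal; simpl; unfold mult; simpl.
    destruct n as [|[|j]].
    + simpl. unfold d1, PS_derive. rewrite (Hu 0%nat). unfold zero; simpl. unfold mm. simpl. field.
    + simpl. unfold d2, d1, PS_derive. rewrite (Hu 1%nat). unfold zero; simpl. unfold mm. simpl. field.
    + simpl PS_incr_1. unfold d2, d1, PS_derive. rewrite (Hu (S (S j))).
      pose proof (mm_pos (S (S j))). unfold mm in *. rewrite !S_INR in *. pose proof (pos_INR j). field. split; lra.
Qed.

Lemma sin2_lt1 t : (Rabs t < 1)%R -> (Rabs (sin t ^ 2) < 1)%R.
Proof.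
  intros Ht. assert (0 < cos t)%R.
  { apply cos_gt_0; pose proof PI2_1; apply Rabs_def2 in Ht; lra. }
  pose proof (sin2_cos2 t). unfold Rsqr in *.
  rewrite Rabs_pos_eq by nra. nra.
Qed.

Lemma comp_sin2 (P P1 : R -> R) t :
  (forall y, (Rabs y < 1)%R -> is_derive P y (P1 y)) -> (Rabs t < 1)%R ->
  is_derive (fun t => P (sin t ^ 2)) t (P1 (sin t ^ 2) * (2 * sin t * cos t))%R.
Proof.
  intros HP Ht.
  pose proof (is_derive_comp P (fun t => sin t ^ 2) t (P1 (sin t ^ 2)) (2 * sin t * cos t)%R
     (HP _ (sin2_lt1 t Ht))) as H.
  unfold scal in H; simpl in H; unfold mult in H; simpl in H.
  rewrite Rmult_comm. apply H. auto_derive; auto. ring.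
Qed.

Definition G1 (u : nat -> R) (t : R) : R := (PSeries (PS_derive u) (sin t ^ 2) * (2 * sin t * cos t))%R.

Lemma PS_deriv_in (u : nat -> R) y : Rbar_le 1 (CV_radius u) -> (Rabs y < 1)%R ->
  is_derive (PSeries u) y (PSeries (PS_derive u) y).
Proof.
  intros Hr Hy. apply is_derive_PSeries. eapply Rbar_lt_le_trans. 2: exact Hr. simpl. exact Hy.
Qed.

Lemma G_sys (u v : nat -> R) (p q t : R) :
  (forall m, u (S m) = ((u m * (4 * INR m ^ 2 + p) - v m * q) / mm m)%R) ->
  Rbar_le 1 (CV_radius u) -> Rbar_le 1 (CV_radius v) -> (Rabs t < 1)%R ->
  is_derive (fun t => PSeries u (sin t ^ 2)) t (G1 u t) /\
  is_derive (G1 u) t (p * PSeries u (sin t ^ 2) - q * PSeries v (sin t ^ 2))%R.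
Proof.
  intros Hu Hru Hrv Ht. split.
  - apply comp_sin2; auto. intros y Hy. apply PS_deriv_in; auto.
  - assert (Hr1 : Rbar_le 1 (CV_radius (PS_derive u))) by (rewrite CV_radius_derive; auto).
    pose proof (comp_sin2 (PSeries (PS_derive u)) (PSeries (PS_derive (PS_derive u))) t
      (fun y Hy => PS_deriv_in _ y Hr1 Hy) Ht) as H1.
    assert (H2 : is_derive (fun t => 2 * sin t * cos t)%R t (2 * (cos t ^ 2 - sin t ^ 2))%R).
    { auto_derive; auto. ring. }
    pose proof (is_derive_mult _ _ t _ _ H1 H2 Rmult_comm) as H3.
    unfold mult, plus in H3. cbn beta in H3.
    assert (Hy := sin2_lt1 t Ht).
    pose proof (F_ode_gen u v p q (sin t ^ 2) Hu
      (Rbar_lt_le_trans (Rabs (sin t ^ 2)) 1 _ Hy Hru) (Rbar_lt_le_trans (Rabs (sin t ^ 2)) 1 _ Hy Hrv)) as HF.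
    pose proof (sin2_cos2 t) as Hsc. unfold Rsqr in Hsc.
    unfold G1. rewrite <- HF.
    replace (4 * sin t ^ 2 * (1 - sin t ^ 2) * PSeries (PS_derive (PS_derive u)) (sin t ^ 2) +
       2 * (1 - 2 * sin t ^ 2) * PSeries (PS_derive u) (sin t ^ 2))
    with (PSeries (PS_derive (PS_derive u)) (sin t ^ 2) * (2 * sin t * cos t) * (2 * sin t * cos t) +
       PSeries (PS_derive u) (sin t ^ 2) * (2 * (cos t ^ 2 - sin t ^ 2))).
    + exact H3.
    + replace (PSeries (PS_derive (PS_derive u)) (sin t ^ 2) * (2 * sin t * cos t) * (2 * sin t * cos t))
        with (PSeries (PS_derive (PS_derive u)) (sin t ^ 2) * 4 * sin t ^ 2 * cos t ^ 2) by ring.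
      replace (cos t ^ 2) with (1 - sin t ^ 2) by (simpl; lra). ring.
Qed.


Lemma energy_bound p q x y x1 y1 :
  2 * (x * x1 + y * y1 + x1 * (p * x - q * y) + y1 * (p * y + q * x)) <=
  (1 + 2 * Rabs p + 2 * Rabs q) * (x^2 + y^2 + x1^2 + y1^2).
Proof.
  assert (A: forall a b c, 0 <= c -> 2 * c * a * b <= c * (a^2 + b^2)) by (intros a b c Hc; pose proof (Rmult_le_pos c ((a-b)^2) Hc (pow2_ge_0 _)); nra).
  assert (B: forall a b c, 0 <= c -> - (2 * c * a * b) <= c * (a^2 + b^2)) by (intros a b c Hc; pose proof (Rmult_le_pos c ((a+b)^2) Hc (pow2_ge_0 _)); nra).
  pose proof (A x x1 1 ltac:(lra)). pose proof (A y y1 1 ltac:(lra)).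
  assert (Hp: 2 * p * x1 * x <= Rabs p * (x1^2 + x^2)).
  { destruct (Rle_dec 0 p). rewrite Rabs_pos_eq by lra. apply A; lra.
    rewrite Rabs_left by lra. pose proof (B x1 x (-p) ltac:(lra)). nra. }
  assert (Hp2: 2 * p * y1 * y <= Rabs p * (y1^2 + y^2)).
  { destruct (Rle_dec 0 p). rewrite Rabs_pos_eq by lra. apply A; lra.
    rewrite Rabs_left by lra. pose proof (B y1 y (-p) ltac:(lra)). nra. }
  assert (Hq: - (2 * q * x1 * y) <= Rabs q * (x1^2 + y^2)).
  { destruct (Rle_dec 0 q). rewrite Rabs_pos_eq by lra. apply B; lra.
    rewrite Rabs_left by lra. pose proof (A x1 y (-q) ltac:(lra)). nra. }
  assert (Hq2: 2 * q * y1 * x <= Rabs q * (y1^2 + x^2)).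
  { destruct (Rle_dec 0 q). rewrite Rabs_pos_eq by lra. apply A; lra.
    rewrite Rabs_left by lra. pose proof (B y1 x (-q) ltac:(lra)). nra. }
  pose proof (Rabs_pos p). pose proof (Rabs_pos q).
  assert (0 <= Rabs p * x^2) by (apply Rmult_le_pos; nra).
  assert (0 <= Rabs p * y1^2) by (apply Rmult_le_pos; nra).
  assert (0 <= Rabs p * x1^2) by (apply Rmult_le_pos; nra).
  assert (0 <= Rabs p * y^2) by (apply Rmult_le_pos; nra).
  assert (0 <= Rabs q * x^2) by (apply Rmult_le_pos; nra).
  assert (0 <= Rabs q * y1^2) by (apply Rmult_le_pos; nra).
  assert (0 <= Rabs q * x1^2) by (apply Rmult_le_pos; nra).
  assert (0 <= Rabs q * y^2) by (apply Rmult_le_pos; nra).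
  nra.
Qed.

Lemma uniq2 (p q : R) (x y x1 y1 : R -> R) :
  (forall t, Rabs t < 1 -> is_derive x t (x1 t) /\ is_derive y t (y1 t) /\
     is_derive x1 t (p * x t - q * y t) /\ is_derive y1 t (p * y t + q * x t)) ->
  x 0 = 0 -> y 0 = 0 -> x1 0 = 0 -> y1 0 = 0 ->
  forall t, 0 <= t < 1 -> x t = 0 /\ y t = 0.
Proof.
  intros HD H0 H1 H2 H3 t Ht.
  set (K := 1 + 2 * Rabs p + 2 * Rabs q).
  set (E := fun s => x s ^ 2 + y s ^ 2 + x1 s ^ 2 + y1 s ^ 2).
  set (phi := fun s => E s * exp (- K * s)).
  set (dphi := fun s => (2 * (x s * x1 s + y s * y1 s + x1 s * (p * x s - q * y s) + y1 s * (p * y s + q * x s))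
                        - K * E s) * exp (- K * s)).
  assert (Hd : forall s, Rabs s < 1 -> is_derive phi s (dphi s)).
  { intros s Hs. destruct (HD s Hs) as (Dx & Dy & Dx1 & Dy1).
    unfold phi, E, dphi. auto_derive.
    - repeat split; eexists; eauto.
    - assert (E1 : Derive (fun z : R => x z) s = x1 s) by (apply is_derive_unique; exact Dx).
      assert (E2 : Derive (fun z : R => y z) s = y1 s) by (apply is_derive_unique; exact Dy).
      assert (E3 : Derive (fun z : R => x1 z) s = p * x s - q * y s) by (apply is_derive_unique; exact Dx1).
      assert (E4 : Derive (fun z : R => y1 z) s = p * y s + q * x s) by (apply is_derive_unique; exact Dy1).
      rewrite E1, E2, E3, E4.
      unfold E. ring. }
  destruct (MVT_gen phi 0 t dphi) as (c & Hc & Hmv).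
  - intros s Hs. apply Hd. rewrite Rmin_left, Rmax_right in Hs by lra.
    apply Rabs_def1; lra.
  - intros s Hs. rewrite Rmin_left, Rmax_right in Hs by lra.
    apply continuity_pt_filterlim. apply (ex_derive_continuous (K := R_AbsRing) (V := R_NormedModule) phi).
    eexists. apply Hd. apply Rabs_def1; lra.
  - rewrite Rmin_left, Rmax_right in Hc by lra.
    assert (Hneg : dphi c <= 0).
    { unfold dphi. apply Rmult_le_0_r. 2: left; apply exp_pos.
      pose proof (energy_bound p q (x c) (y c) (x1 c) (y1 c)). unfold E, K. lra. }
    assert (Hphi0 : phi 0 = 0). { unfold phi, E. rewrite H0, H1, H2, H3. ring. }
    assert (Hpt : phi t <= 0). { rewrite Hphi0 in Hmv. nra. }
    unfold phi in Hpt. pose proof (exp_pos (- K * t)).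
    assert (E t <= 0) by nra.
    unfold E in *. split; nra.
Qed.

Definition Hr br bi t := (exp (br * t) + exp (- br * t)) / 2 * cos (bi * t).
Definition Hi br bi t := (exp (br * t) - exp (- br * t)) / 2 * sin (bi * t).
Definition Hr1 br bi t := br * (exp (br * t) - exp (- br * t)) / 2 * cos (bi * t)
                          - bi * (exp (br * t) + exp (- br * t)) / 2 * sin (bi * t).
Definition Hi1 br bi t := br * (exp (br * t) + exp (- br * t)) / 2 * sin (bi * t)
                          + bi * (exp (br * t) - exp (- br * t)) / 2 * cos (bi * t).

Lemma H_sys br bi t :
  is_derive (Hr br bi) t (Hr1 br bi t) /\ is_derive (Hi br bi) t (Hi1 br bi t) /\
  is_derive (Hr1 br bi) t ((br^2 - bi^2) * Hr br bi t - (2 * br * bi) * Hi br bi t) /\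
  is_derive (Hi1 br bi) t ((br^2 - bi^2) * Hi br bi t + (2 * br * bi) * Hr br bi t).
Proof.
  unfold Hr, Hi, Hr1, Hi1. split; [|split; [|split]].
  - auto_derive. auto. field.
  - auto_derive. auto. field.
  - auto_derive. auto. field.
  - auto_derive. auto. field.
Qed.

Lemma dminus (f g : R -> R) t df dg : is_derive f t df -> is_derive g t dg ->
  is_derive (fun x => f x - g x) t (df - dg).
Proof. intros H1 H2. exact (is_derive_minus f g t df dg H1 H2). Qed.

Lemma dval (f : R -> R) t a b : is_derive f t a -> a = b -> is_derive f t b.
Proof. intros H ->. exact H. Qed.

Lemma ana (s : C) br bi : fst s = br^2 - bi^2 -> snd s = 2*br*bi -> forall t, 0 <= t < 1 ->
  PSeries (uu s) (sin t ^ 2) = Hr br bi t /\ PSeries (vv s) (sin t ^ 2) = Hi br bi t.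
Proof.
  intros Hp Hq t Ht.
  pose proof (radius_ge1 _ s (fun n => or_introl eq_refl)) as ru.
  pose proof (radius_ge1 _ s (fun n => or_intror eq_refl)) as rv.
  assert (Hv: forall m, vv s (S m) = (vv s m * (4 * INR m^2 + fst s) - uu s m * (- snd s))/mm m).
  { intros. rewrite vv_S. f_equal. ring. }
  destruct (uniq2 (fst s) (snd s) (fun t => PSeries (uu s) (sin t^2) - Hr br bi t)
     (fun t => PSeries (vv s) (sin t^2) - Hi br bi t)
     (fun t => G1 (uu s) t - Hr1 br bi t) (fun t => G1 (vv s) t - Hi1 br bi t)) with (t := t)
     as [E1 E2]; auto.
  - intros t0 Ht0.
    destruct (G_sys (uu s) (vv s) (fst s) (snd s) t0 (uu_S s) ru rv Ht0) as [Da Db].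
    destruct (G_sys (vv s) (uu s) (fst s) (- snd s) t0 Hv rv ru Ht0) as [Dc Dd].
    destruct (H_sys br bi t0) as (D1 & D2 & D3 & D4).
    rewrite <- Hp, <- Hq in D3, D4.
    split; [|split; [|split]].
    + cbv beta. exact (dminus _ _ _ _ _ Da D1).
    + cbv beta. exact (dminus _ _ _ _ _ Dc D2).
    + cbv beta. eapply dval. apply (dminus _ _ _ _ _ Db D3). lra.
    + cbv beta. eapply dval. apply (dminus _ _ _ _ _ Dd D4). lra.
  - cbv beta. replace (sin 0 ^ 2) with 0 by (rewrite sin_0; ring). rewrite PSeries_0.
    unfold Hr. rewrite !Rmult_0_r, ?Ropp_0, exp_0, cos_0.
    unfold uu. simpl. field.
  - cbv beta. replace (sin 0 ^ 2) with 0 by (rewrite sin_0; ring). rewrite PSeries_0.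
    unfold Hi. rewrite !Rmult_0_r, sin_0.
    unfold vv. simpl. field.
  - unfold G1, Hr1. rewrite !Rmult_0_r, ?sin_0. rewrite exp_0; lra.
  - unfold G1, Hi1. rewrite !Rmult_0_r, ?sin_0, ?Ropp_0, ?exp_0. lra.
  - split; lra.
Qed.

Open Scope C_scope.
Definition sC (z : C) : C := 36 * z ^ 2.

Lemma sC_fst z : fst (sC z) = ((6 * fst z) ^ 2 - (6 * snd z) ^ 2)%R.
Proof. destruct z as [a b]. unfold sC. simpl. ring. Qed.
Lemma sC_snd z : snd (sC z) = (2 * (6 * fst z) * (6 * snd z))%R.
Proof. destruct z as [a b]. unfold sC. simpl. ring. Qed.

Lemma tt_aa z n : tt z n = aa (sC z) n * RtoC ((1/4) ^ n).
Proof.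
  induction n as [|n IH].
  - unfold tt. simpl. field.
  - unfold tt in *. rewrite fact2S. cbn [prod_term aa].
    replace (prod_term z n * (RtoC (INR n) ^ 2 + 9 * z ^ 2) /
      RtoC ((2 * INR n + 2) * (2 * INR n + 1) * INR (fact (2 * n)))%R)
     with (prod_term z n / RtoC (INR (fact (2 * n))) * ((RtoC (INR n) ^ 2 + 9 * z ^ 2) / RtoC (mm n))).
    2:{ unfold mm. rewrite !RtoC_mult. field. pose proof (pos_INR n).
        repeat split; apply RtoC_neq0; try apply INR_fact_neq_0; lra. }
    rewrite IH. unfold sC. pose proof (mm_pos n).
    rewrite (RtoC_inv (mm n)) by lra.
    rewrite !RtoC_pow, (RtoC_div 1 4) by lra.
    repeat (rewrite ?RtoC_mult, ?RtoC_plus, ?RtoC_minus, ?RtoC_pow, ?RtoC_opp).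
    simpl. field. apply RtoC_neq0. lra.
Qed.

Lemma sum_n_C (f : nat -> C) n : sum_n f n = (sum_n (fun k => fst (f k)) n, sum_n (fun k => snd (f k)) n).
Proof.
  induction n as [|n IH].
  - rewrite !sum_O. destruct (f 0%nat); reflexivity.
  - rewrite !sum_Sn, IH. destruct (f (S n)). reflexivity.
Qed.

Lemma is_series_C (f : nat -> C) a b :
  is_series (fun n => fst (f n)) a -> is_series (fun n => snd (f n)) b -> is_series f (a, b).
Proof.
  intros Ha Hb. unfold is_series in *.
  apply filterlim_locally. intros eps.
  pose proof (proj1 (filterlim_locally _ _) Ha eps) as Ha'.
  pose proof (proj1 (filterlim_locally _ _) Hb eps) as Hb'.
  clear Ha Hb. rename Ha' into Ha. rename Hb' into Hb.
  generalize (filter_and _ _ Ha Hb). apply filter_imp.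
  intros n [H1 H2]. rewrite sum_n_C. split; assumption.
Qed.

Lemma Ccosh_eq (z : C) :
  Ccosh (RtoC PI * z) = (Hr (6 * fst z) (6 * snd z) (PI / 6), Hi (6 * fst z) (6 * snd z) (PI / 6)).
Proof.
  destruct z as [a b]. simpl fst; simpl snd.
  unfold Ccosh, Cexp, Hr, Hi.
  rewrite re_opp, im_opp.
  assert (HR: Re (RtoC PI * (a, b)) = (6 * a * (PI / 6))%R) by (simpl; field).
  assert (HI: Im (RtoC PI * (a, b)) = (6 * b * (PI / 6))%R) by (simpl; field).
  rewrite !HR, !HI.
  unfold Copp, Cplus, Cdiv, Cinv, Cmult. simpl.
  replace (- (6 * a * (PI / 6)))%R with (- (6 * a) * (PI / 6))%R by ring.
  replace (- (6 * b * (PI / 6)))%R with (- (6 * b) * (PI / 6))%R by ring.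
  replace (- (6 * b) * (PI / 6))%R with (- (6 * b * (PI / 6)))%R by ring.
  rewrite cos_neg, sin_neg.
  f_equal; field.
Qed.

Lemma comp_series (f : nat -> R) s q :
  (forall n, f n = uu s n \/ f n = vv s n) -> (Rabs q < 1)%R ->
  is_series (fun n => (f n * q ^ n)%R) (PSeries f q).
Proof.
  intros Hf Hq. apply isPS. apply CV_radius_inside.
  eapply Rbar_lt_le_trans. 2: apply (radius_ge1 f s Hf). simpl. exact Hq.
Qed.

Theorem mainTheorem18 (z : C) :
  is_series (fun n : nat => prod_term z n / RtoC (INR (fact (2 * n))))
            (Ccosh (RtoC PI * z))
  /\ cf_value (cf_a z) (cf_b z) (Ccosh (RtoC PI * z)).
Proof.
  assert (HS : is_series (tt z) (Ccosh (RtoC PI * z))).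
  { rewrite Ccosh_eq.
    destruct (ana (sC z) (6 * fst z) (6 * snd z) (sC_fst z) (sC_snd z) (PI / 6)) as [E1 E2].
    { pose proof PI_RGT_0. pose proof PI_4. split; lra. }
    rewrite sin_PI6 in E1, E2.
    replace ((1/2)^2)%R with (1/4)%R in E1, E2 by field.
    rewrite <- E1, <- E2.
    apply (is_series_ext (fun n => aa (sC z) n * RtoC ((1/4)^n))).
    { intros n. symmetry. apply tt_aa. }
    apply is_series_C.
    - eapply is_series_ext. 2: apply (comp_series (uu (sC z)) (sC z) (1/4)).
      + intros n. unfold uu. destruct (aa (sC z) n). simpl. ring.
      + intros; left; reflexivity.
      + rewrite Rabs_pos_eq; lra.
    - eapply is_series_ext. 2: apply (comp_series (vv (sC z)) (sC z) (1/4)).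
      + intros n. unfold vv. destruct (aa (sC z) n). simpl. ring.
      + intros; right; reflexivity.
      + rewrite Rabs_pos_eq; lra. }
  split.
  - exact HS.
  - apply cf_part. exact HS.
Qed.
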